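(* Let $f:2^V\to\mathbb{Z}_{\ge0}$ be a connectivity function, $W\subseteq V$, and $(C_1,C_2,C_3)$ a minimum $W$-improvement of arity 3. Then for every $i\in\{1,2,3\}$, $W$ directly orients $C_i$.
   Context: A connectivity function $f:2^V\to\mathbb{Z}_{\ge0}$ ($V$ finite) satisfies $f(\emptyset)=0$, $f(X)=f(V\setminus X)$, and $f(X\cup Y)+f(X\cap Y)\le f(X)+f(Y)$. Write $\overline{X}=V\setminus X$. $W$ directly orients $C$ if $f(C\cap W)<f(\overline{C}\cap W)$ and $f(C\cap\overline{W})<f(\overline{C}\cap\overline{W})$. For $W\subseteq V$, a $W$-improvement is a tripartition $(C_1,C_2,C_3)$ of $V$ (pairwise disjoint, possibly empty, union $V$) with $f(C_i)<f(W)/2$, $f(C_i\cap W)<f(W)$, $f(C_i\cap\overline{W})<f(W)$ for each $i$. Its width is $\max_i f(C_i)$, its sum-width is $\sum_i f(C_i)$, and its arity is the number of nonempty $C_i$. A $W$-improvement is minimum if it has minimum width among all $W$-improvements, subject to that minimum arity, and subject to those minimum sum-width. *)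

(* Defs.v *)
From mathcomp Require Import all_boot.
Set Implicit Arguments. Unset Strict Implicit. Unset Printing Implicit Defensive.

Definition connectivity (V : finType) (f : {set V} -> nat) : Prop :=
  [/\ f set0 = 0,
      forall X : {set V}, f X = f (~: X)
    & forall X Y : {set V}, f (X :|: Y) + f (X :&: Y) <= f X + f Y].

Definition directly_orients (V : finType) (f : {set V} -> nat) (W C : {set V}) : Prop :=
  f (C :&: W) < f (~: C :&: W) /\ f (C :&: ~: W) < f (~: C :&: ~: W).

(* (C1,C2,C3) is a tripartition of V: pairwise disjoint, union V (parts may be empty) *)
Definition tripartition (V : finType) (C1 C2 C3 : {set V}) : Prop :=
  [/\ [disjoint C1 & C2], [disjoint C1 & C3], [disjoint C2 & C3]
    & C1 :|: C2 :|: C3 = setT].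

(* f(C) < f(W)/2 is written 2 * f C < f W (exact, no rounding). *)
Definition improvement_part (V : finType) (f : {set V} -> nat) (W C : {set V}) : Prop :=
  [/\ 2 * f C < f W, f (C :&: W) < f W & f (C :&: ~: W) < f W].

Definition W_improvement (V : finType) (f : {set V} -> nat) (W C1 C2 C3 : {set V}) : Prop :=
  [/\ tripartition C1 C2 C3, improvement_part f W C1,
      improvement_part f W C2 & improvement_part f W C3].

Definition width (V : finType) (f : {set V} -> nat) (C1 C2 C3 : {set V}) : nat :=
  maxn (f C1) (maxn (f C2) (f C3)).

Definition sum_width (V : finType) (f : {set V} -> nat) (C1 C2 C3 : {set V}) : nat :=
  f C1 + f C2 + f C3.

Definition arity (V : finType) (C1 C2 C3 : {set V}) : nat :=
  (C1 != set0) + (C2 != set0) + (C3 != set0).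

Definition min_W_improvement (V : finType) (f : {set V} -> nat) (W C1 C2 C3 : {set V}) : Prop :=
  W_improvement f W C1 C2 C3 /\
  forall D1 D2 D3 : {set V}, W_improvement f W D1 D2 D3 ->
    width f C1 C2 C3 < width f D1 D2 D3 \/
    (width f C1 C2 C3 = width f D1 D2 D3 /\
      (arity C1 C2 C3 < arity D1 D2 D3 \/
       (arity C1 C2 C3 = arity D1 D2 D3 /\
        sum_width f C1 C2 C3 <= sum_width f D1 D2 D3))).

(* Main.v *)
Require Import Defs.
From mathcomp Require Import all_boot.
From mathcomp Require Import zify.
Set Implicit Arguments. Unset Strict Implicit.

Lemma core (V : finType) (f : {set V} -> nat) (W C : {set V}) :
  connectivity f -> improvement_part f W C ->
  ~ (f (~: C :&: W) < f W /\ f (~: C :&: ~: W) < f W) ->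
  directly_orients f W C.
Proof.
case=> f0 fC fS [h1 h2 h3] hn.
have s1 := fS C W. have s2 := fS C (~: W).
have s3 := fS (C :&: W) (~: C :&: W).
have s4 := fS (C :&: ~: W) (~: C :&: ~: W).
have e1 : f (C :|: W) = f (~: C :&: ~: W) by rewrite fC setCU.
have e2 : f (C :|: ~: W) = f (~: C :&: W) by rewrite fC setCU setCK.
have e3 : (C :&: W) :|: (~: C :&: W) = W by rewrite -setIUl setUCr setTI.
have e4 : (C :&: ~: W) :|: (~: C :&: ~: W) = ~: W by rewrite -setIUl setUCr setTI.
have e5 : (C :&: W) :&: (~: C :&: W) = set0.
  by rewrite setIACA setICr set0I.
have e6 : (C :&: ~: W) :&: (~: C :&: ~: W) = set0.
  by rewrite setIACA setICr set0I.
rewrite e3 e5 f0 in s3. rewrite e4 e6 f0 -fC in s4.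
rewrite e1 in s1. rewrite e2 -fC in s2.
rewrite /directly_orients. lia.
Qed.

Lemma width_ge (V : finType) (f : {set V} -> nat) (C1 C2 C3 : {set V}) :
  [/\ f C1 <= width f C1 C2 C3, f C2 <= width f C1 C2 C3 & f C3 <= width f C1 C2 C3].
Proof. rewrite /width; split; lia. Qed.

Lemma gen (V : finType) (f : {set V} -> nat) (W C1 C2 C3 C : {set V}) :
  connectivity f ->
  min_W_improvement f W C1 C2 C3 ->
  arity C1 C2 C3 = 3 ->
  C != set0 -> ~: C != set0 -> improvement_part f W C ->
  f C <= width f C1 C2 C3 ->
  directly_orients f W C.
Proof.
move=> hc [_ hmin] har hC hCc hp hw.
apply: (core hc hp) => -[a b].
have hcc := hc. case: hcc => f0 fC fS.
case: hp => p1 p2 p3.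
have imp : W_improvement f W C (~: C) set0.
  split.
  - split.
    + by rewrite -setI_eq0 setICr.
    + by rewrite -setI_eq0 setI0.
    + by rewrite -setI_eq0 setI0.
    + by rewrite setU0 setUCr.
  - by split.
  - by split; rewrite -?fC.
  - by split; rewrite ?set0I f0 //; lia.
have := hmin _ _ _ imp.
have ew : width f C (~: C) set0 = f C by rewrite /width -fC f0; lia.
have ea : arity C (~: C) set0 = 2 by rewrite /arity hC hCc eqxx.
rewrite ew ea har. lia.
Qed.

Lemma nonemptyC (V : finType) (A B : {set V}) :
  [disjoint A & B] -> B != set0 -> ~: A != set0.
Proof.
move=> hd hB; apply/negP => /eqP hA.
have : A = setT by rewrite -[A]setCK hA setC0.
move=> eA; move: hd; rewrite eA -setI_eq0 setTI => /eqP; exact/eqP.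
Qed.

Theorem lemma7 (V : finType) (f : {set V} -> nat) (W C1 C2 C3 : {set V}) :
  connectivity f ->
  min_W_improvement f W C1 C2 C3 ->
  arity C1 C2 C3 = 3 ->
  [/\ directly_orients f W C1, directly_orients f W C2 & directly_orients f W C3].
Proof.
move=> hc hm har.
have hm' := hm. case: hm' => -[[d12 d13 d23 _] p1 p2 p3] _.
have [n1 n2 n3] : [/\ C1 != set0, C2 != set0 & C3 != set0].
  by move: har; rewrite /arity; do 3 case: (_ != set0).
have [w1 w2 w3] := width_ge f C1 C2 C3.
split.
- exact: (gen hc hm har n1 (nonemptyC d12 n2) p1 w1).
- by apply: (gen hc hm har n2 _ p2 w2); apply: (nonemptyC _ n1); rewrite disjoint_sym.
- by apply: (gen hc hm har n3 _ p3 w3); apply: (nonemptyC _ n1); rewrite disjoint_sym.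
Qed.
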